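(* Let $\mathbf A$ be a residuated semigroup satisfying $xx=x$ for all $x$. The following are equivalent: (1) $(x/x)y=y(x/x)$ for all $x,y$; (2) $x\backslash x=x/x$ for all $x$; (3) $\mathbf A$ is commutative ($xy=yx$ for all $x,y$). Moreover, each of these conditions implies the conditions (H1), (H2), (H3): for all $x,y$, if $x/x=y/y$ then $(xy)/(xy)=x/x$, $(x/y)/(x/y)=x/x$ and $(x\backslash y)/(x\backslash y)=x/x$.
   Context: A residuated semigroup is a structure $\langle A,\le,\cdot,\backslash,/\rangle$ where $\langle A,\le\rangle$ is a poset, $\langle A,\cdot\rangle$ is a semigroup (we write $xy$ for $x\cdot y$), and for all $x,y,z$: $xy\le z\iff x\le z/y\iff y\le x\backslash z$. *)

(* Defs.v *)
Record residuated_semigroup := {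
  rs_carrier :> Type;
  rs_le : rs_carrier -> rs_carrier -> Prop;
  rs_mul : rs_carrier -> rs_carrier -> rs_carrier;
  rs_ldiv : rs_carrier -> rs_carrier -> rs_carrier;
  rs_rdiv : rs_carrier -> rs_carrier -> rs_carrier;
  rs_le_refl : forall x, rs_le x x;
  rs_le_antisym : forall x y, rs_le x y -> rs_le y x -> x = y;
  rs_le_trans : forall x y z, rs_le x y -> rs_le y z -> rs_le x z;
  rs_mul_assoc : forall x y z, rs_mul (rs_mul x y) z = rs_mul x (rs_mul y z);
  rs_res_r : forall x y z, rs_le (rs_mul x y) z <-> rs_le x (rs_rdiv z y);
  rs_res_l : forall x y z, rs_le (rs_mul x y) z <-> rs_le y (rs_ldiv x z)
}.

Arguments rs_le {_}.
Arguments rs_mul {_}.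
Arguments rs_ldiv {_}.
Arguments rs_rdiv {_}.

(* Main.v *)
Require Import Defs.
From Stdlib Require Import Setoid.

Notation "x ⊑ y" := (rs_le x y) (at level 70).
Notation "x ⋅ y" := (rs_mul x y) (at level 40, left associativity).

Lemma mono_l (A : residuated_semigroup) (a b c : A) : a ⊑ b -> c ⋅ a ⊑ c ⋅ b.
Proof.
  intro H. apply rs_res_l. apply rs_le_trans with b; auto.
  apply rs_res_l. apply rs_le_refl.
Qed.

Lemma mono_r (A : residuated_semigroup) (a b c : A) : a ⊑ b -> a ⋅ c ⊑ b ⋅ c.
Proof.
  intro H. apply rs_res_r. apply rs_le_trans with b; auto.
  apply rs_res_r. apply rs_le_refl.
Qed.

Lemma rdiv_mul (A : residuated_semigroup) (y z : A) : rs_rdiv z y ⋅ y ⊑ z.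
Proof. apply rs_res_r. apply rs_le_refl. Qed.

Lemma mul_ldiv (A : residuated_semigroup) (y z : A) : y ⋅ rs_ldiv y z ⊑ z.
Proof. apply rs_res_l. apply rs_le_refl. Qed.

Lemma le_rdiv (A : residuated_semigroup) (t y z : A) : t ⋅ y ⊑ z -> t ⊑ rs_rdiv z y.
Proof. apply rs_res_r. Qed.

Lemma le_ldiv (A : residuated_semigroup) (t y z : A) : y ⋅ t ⊑ z -> t ⊑ rs_ldiv y z.
Proof. apply rs_res_l. Qed.

Lemma comm_of_K (A : residuated_semigroup) (idem : forall x : A, x ⋅ x = x)
  (K1 : forall a b : A, b ⋅ (a ⋅ b) ⊑ a ⋅ b)
  (K2 : forall a b : A, (a ⋅ b) ⋅ a ⊑ a ⋅ b) :
  forall x y : A, x ⋅ y = y ⋅ x.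
Proof.
  assert (L : forall x y : A, x ⋅ y ⊑ y ⋅ x).
  { intros x y. rewrite <- (idem (x ⋅ y)).
    replace (x ⋅ y ⋅ (x ⋅ y)) with (x ⋅ (y ⋅ x) ⋅ y)
      by (rewrite !rs_mul_assoc; reflexivity).
    apply rs_le_trans with (y ⋅ x ⋅ y).
    - apply mono_r. apply K1.
    - apply K2. }
  intros; apply rs_le_antisym; apply L.
Qed.

Theorem proposition7p1 (A : residuated_semigroup)
  (idem : forall x : A, rs_mul x x = x) :
  let P1 := forall x y : A, rs_mul (rs_rdiv x x) y = rs_mul y (rs_rdiv x x) in
  let P2 := forall x : A, rs_ldiv x x = rs_rdiv x x in
  let P3 := forall x y : A, rs_mul x y = rs_mul y x in
  let H := forall x y : A, rs_rdiv x x = rs_rdiv y y ->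
      rs_rdiv (rs_mul x y) (rs_mul x y) = rs_rdiv x x /\
      rs_rdiv (rs_rdiv x y) (rs_rdiv x y) = rs_rdiv x x /\
      rs_rdiv (rs_ldiv x y) (rs_ldiv x y) = rs_rdiv x x in
  (P1 <-> P2) /\ (P2 <-> P3) /\ (P1 -> H) /\ (P2 -> H) /\ (P3 -> H).
Proof.
  intros P1 P2 P3 H.
  assert (cz : forall z : A, rs_rdiv z z ⋅ z = z).
  { intro z. apply rs_le_antisym. apply rdiv_mul.
    rewrite <- (idem z) at 1. apply mono_r. apply le_rdiv. rewrite idem. apply rs_le_refl. }
  assert (P1P3 : P1 -> P3).
  { intro p1. unfold P3. apply comm_of_K; auto.
    - intros a b. set (d := rs_rdiv (b ⋅ a) (b ⋅ a)).
      assert (dab : d ⋅ (a ⋅ b) = a ⋅ b).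
      { pose proof (cz (b ⋅ a)) as Cd. fold d in Cd.
        assert (Pd : d ⋅ a = a ⋅ d) by (unfold d; apply p1).
        symmetry.
        transitivity (a ⋅ (d ⋅ (b ⋅ a)) ⋅ b).
        { rewrite Cd. transitivity (a ⋅ b ⋅ (a ⋅ b)). symmetry; apply idem.
          rewrite !rs_mul_assoc; reflexivity. }
        transitivity ((a ⋅ d) ⋅ (b ⋅ a) ⋅ b). { rewrite !rs_mul_assoc; reflexivity. }
        rewrite <- Pd. rewrite !rs_mul_assoc. f_equal.
        replace (a ⋅ (b ⋅ (a ⋅ b))) with (a ⋅ b ⋅ (a ⋅ b)) by (rewrite !rs_mul_assoc; reflexivity).
        apply idem. }
      rewrite <- dab at 2. apply mono_r. unfold d. apply le_rdiv.
      rewrite <- rs_mul_assoc, idem. apply rs_le_refl.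
    - intros a b. set (c := rs_rdiv (a ⋅ b) (a ⋅ b)).
      apply rs_le_trans with (a ⋅ b ⋅ c).
      + apply mono_l. unfold c. apply le_rdiv. rewrite <- rs_mul_assoc, idem. apply rs_le_refl.
      + unfold c. rewrite <- p1. rewrite cz. apply rs_le_refl. }
  assert (P2P3 : P2 -> P3).
  { intro p2. unfold P3. apply comm_of_K; auto.
    - intros a b. apply rs_res_r. rewrite <- p2. apply le_ldiv.
      rewrite rs_mul_assoc, idem. apply rs_le_refl.
    - intros a b. apply rs_res_l. rewrite p2. apply le_rdiv.
      rewrite <- rs_mul_assoc, idem. apply rs_le_refl. }
  assert (swap : P3 -> forall x y : A, rs_ldiv x y = rs_rdiv y x).
  { intros p3 x y. apply rs_le_antisym.
    - apply le_rdiv. rewrite p3. apply mul_ldiv.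
    - apply le_ldiv. rewrite p3. apply rdiv_mul. }
  assert (P3P2 : P3 -> P2). { intros p3 x. apply swap; auto. }
  assert (P3P1 : P3 -> P1). { intros p3 x y. apply p3. }
  assert (P3H : P3 -> H).
  { intros p3 x y e.
    assert (p2 : P2) by auto.
    assert (xy_le : forall u v : A, rs_rdiv u u = rs_rdiv v v -> u ⋅ v ⊑ v).
    { intros u v E. apply rs_res_r. rewrite <- E. apply le_rdiv. rewrite idem. apply rs_le_refl. }
    assert (second : forall x y : A, rs_rdiv x x = rs_rdiv y y ->
              rs_rdiv (rs_rdiv x y) (rs_rdiv x y) = rs_rdiv x x).
    { clear x y e. intros x y E. set (w := rs_rdiv x y). set (ex := rs_rdiv x x).
      assert (xw : x ⊑ w).
      { unfold w. apply le_rdiv. rewrite p3. apply xy_le. rewrite E. reflexivity. }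
      assert (we : w ⊑ ex).
      { unfold ex. rewrite E. apply le_rdiv.
        rewrite <- (idem y) at 1. rewrite <- rs_mul_assoc.
        apply rs_le_trans with (x ⋅ y).
        - apply mono_r. apply rdiv_mul.
        - apply xy_le; auto. }
      apply rs_le_antisym.
      - unfold ex. apply le_rdiv.
        assert (fx : rs_rdiv w w ⋅ x ⊑ ex).
        { apply rs_le_trans with (rs_rdiv w w ⋅ w). apply mono_l; auto.
          apply rs_le_trans with w; auto. apply rdiv_mul. }
        apply rs_res_r in fx. rewrite rs_mul_assoc, idem in fx. exact fx.
      - apply le_rdiv. unfold w. apply le_rdiv. rewrite rs_mul_assoc.
        apply rs_le_trans with (ex ⋅ x). apply mono_l. apply rdiv_mul.
        apply rdiv_mul. }
    split; [|split].
    - apply rs_le_antisym.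
      + apply le_rdiv.
        assert (fx : rs_rdiv (x ⋅ y) (x ⋅ y) ⋅ x ⊑ rs_rdiv x x).
        { rewrite e. apply le_rdiv. rewrite rs_mul_assoc.
          apply rs_le_trans with (x ⋅ y). apply rdiv_mul. apply xy_le; auto. }
        apply rs_res_r in fx. rewrite rs_mul_assoc, idem in fx. exact fx.
      + apply le_rdiv. rewrite <- rs_mul_assoc. apply mono_r. apply rdiv_mul.
    - apply second; auto.
    - rewrite swap by auto. rewrite second by auto. symmetry; exact e. }
  split; [split; intro h|split; [split; intro h|split; [|split]]].
  - apply P3P2, P1P3, h.
  - apply P3P1, P2P3, h.
  - apply P2P3, h.
  - apply P3P2, h.
  - intro h; apply P3H, P1P3, h.
  - intro h; apply P3H, P2P3, h.
  - exact P3H.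
Qed.
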